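(* For $0<x\le y<1$, $$I(x,y):=\int_0^{\mathrm{arcosh}(1/y)}\frac{dt}{\sqrt{1-x^2\cosh^2t}}\le K\big(\sqrt{1-x^2}\big),$$ with equality only for $x=y$.
   Context: $K(k)=\int_0^{\pi/2}(1-k^2\sin^2\tau)^{-1/2}d\tau$ is the complete elliptic integral of the first kind, $0\le k<1$. *)

(* Defs.v *)
From HB Require Import structures.
From mathcomp Require Import all_boot all_order all_algebra.
From mathcomp Require Import all_classical all_reals all_analysis.
Set Implicit Arguments. Unset Strict Implicit. Unset Printing Implicit Defensive.
Import Order.TTheory GRing.Theory Num.Theory.
Local Open Scope ring_scope.
Local Open Scope classical_set_scope.

Definition cosh {R : realType} (t : R) : R := (expR t + expR (- t)) / 2.
Definition arcosh {R : realType} (z : R) : R := ln (z + Num.sqrt (z ^+ 2 - 1)).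

Definition ellK {R : realType} (k : R) : \bar R :=
  (\int[@lebesgue_measure R]_(tau in `[0%R, (pi / 2)%R]) ((Num.sqrt (1 - k ^+ 2 * sin tau ^+ 2))^-1)%:E)%E.

(* I(x,y) = int_0^{arcosh(1/y)} dt / sqrt(1 - x^2 cosh^2 t)  (Lebesgue integral of a
   nonnegative function, possibly improper at the upper endpoint when x = y) *)
Definition Ixy {R : realType} (x y : R) : \bar R :=
  (\int[@lebesgue_measure R]_(t in `[0%R, arcosh y^-1]) ((Num.sqrt (1 - x ^+ 2 * cosh t ^+ 2))^-1)%:E)%E.

(* Main.v *)
Require Import Defs.
From HB Require Import structures.
From mathcomp Require Import all_boot all_order all_algebra.
From mathcomp Require Import all_classical all_reals all_analysis.
From mathcomp Require Import measurable_realfun.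
From mathcomp.algebra_tactics Require Import ring lra.
Import Order.TTheory GRing.Theory Num.Theory.
Import numFieldNormedType.Exports.
Set Implicit Arguments. Unset Strict Implicit.
Local Open Scope ring_scope.
Local Open Scope classical_set_scope.

Lemma coshN (R : realType) (t : R) : cosh (- t) = cosh t.
Proof. by rewrite /cosh opprK addrC. Qed.

Lemma cosh_ge1 (R : realType) (t : R) : 1 <= cosh t.
Proof.
rewrite /cosh expRN.
have e0 := expR_gt0 t; set e := expR t in e0 *.
rewrite ler_pdivlMr // mul1r.
have -> : e + e^-1 = ((e - 1)^+2) / e + 2 by field; rewrite gt_eqF.
by rewrite lerDr divr_ge0 // ?sqr_ge0 // ltW.
Qed.

Lemma cosh_lt (R : realType) (t s : R) : 0 <= t -> t < s -> cosh t < cosh s.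
Proof.
move=> t0 ts; rewrite /cosh !expRN ltr_pM2r //.
have et : 1 <= expR t by rewrite -expR0 ler_expR.
have es : expR t < expR s by rewrite ltr_expR.
set a := expR t in et es *; set b := expR s in es *.
have a0 : 0 < a by lra.
have b0 : 0 < b by lra.
have -> : b + b^-1 = a + a^-1 + (b - a) * (a * b - 1) / (a * b).
  by field; rewrite !gt_eqF.
rewrite ltrDl divr_gt0 ?mulr_gt0 //; first lra.
by rewrite subr_gt0; nra.
Qed.

Lemma cosh_arcosh (R : realType) (z : R) : 1 <= z -> cosh (arcosh z) = z.
Proof.
move=> z1; rewrite /cosh /arcosh expRN.
have w0 : 0 <= Num.sqrt (z ^+ 2 - 1) := sqrtr_ge0 _.
have ww : Num.sqrt (z ^+ 2 - 1) ^+ 2 = z ^+ 2 - 1 by rewrite sqr_sqrtr // subr_ge0 expr_ge1 // (le_trans ler01 z1).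
set w := Num.sqrt _ in w0 ww *.
rewrite lnK; last by rewrite posrE; lra.
apply: (@mulfI _ 2); first by rewrite pnatr_eq0.
rewrite mulrCA divff ?pnatr_eq0 // mulr1.
have zw : z + w != 0 by rewrite gt_eqF //; lra.
apply: (@mulfI _ (z + w)) => //.
rewrite mulrDr divff //; nra.
Qed.

Lemma arcosh_ge0 (R : realType) (z : R) : 1 <= z -> 0 <= arcosh z.
Proof.
move=> z1; rewrite /arcosh ln_ge0 //.
have := sqrtr_ge0 (z ^+ 2 - 1); lra.
Qed.

Lemma arcosh_lt (R : realType) (z z' : R) : 1 <= z -> z < z' -> arcosh z < arcosh z'.
Proof.
move=> z1 zz; rewrite /arcosh ltr_ln ?posrE; last 2 first.
- have := sqrtr_ge0 (z ^+ 2 - 1); lra.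
- have := sqrtr_ge0 (z' ^+ 2 - 1); lra.
apply: ltr_leD => //; rewrite ler_sqrt ?lerD2r; last first.
  by rewrite subr_ge0 expr_ge1 //; lra.
by rewrite ler_pXn2r ?nnegrE //; lra.
Qed.
Lemma continuous_cosh (R : realType) : continuous (@cosh R).
Proof.
move=> t; rewrite /cosh.
apply: cvgM; last exact: cvg_cst.
apply: cvgD; first exact: continuous_expR.
apply: continuous_comp; first exact: continuousN.
exact: continuous_expR.
Qed.

Definition fI (R : realType) (x t : R) := (Num.sqrt (1 - x ^+ 2 * cosh t ^+ 2))^-1.
Definition gK (R : realType) (k th : R) := (Num.sqrt (1 - k ^+ 2 * sin th ^+ 2))^-1.

Lemma continuous_invsqrt (R : realType) (h : R -> R) (t : R) :
  {for t, continuous h} -> 0 < h t ->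
  {for t, continuous (fun s => (Num.sqrt (h s))^-1)}.
Proof.
move=> ch ht.
apply: (@continuous_comp _ _ _ h (fun v => (Num.sqrt v)^-1)) => //.
apply: (@continuous_comp _ _ _ Num.sqrt GRing.inv); first exact: sqrt_continuous.
by apply: inv_continuous; rewrite gt_eqF // sqrtr_gt0.
Qed.

Lemma fI_pos_region (R : realType) (x t : R) : 0 < x < 1 ->
  `|t| < arcosh x^-1 -> 0 < 1 - x ^+ 2 * cosh t ^+ 2.
Proof.
move=> /andP[x0 x1] tT.
have x1' : 1 <= x^-1 by rewrite invr_ge1 ?unitfE ?gt_eqF // ltW.
have ct : cosh t < x^-1.
  rewrite -[X in _ < X](cosh_arcosh x1').
  have -> : cosh t = cosh `|t| by case: (ger0P t) => // _; rewrite coshN.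
  exact: cosh_lt.
have c1 := cosh_ge1 t.
have xc : x * cosh t < 1 by rewrite -(ltr_pdivlMl _ _ x0) mulr1.
rewrite subr_gt0 -exprMn expr_lt1 //; apply: mulr_ge0; lra.
Qed.

Lemma continuous_fI (R : realType) (x t : R) : 0 < x < 1 ->
  `|t| < arcosh x^-1 -> {for t, continuous (fI x)}.
Proof.
move=> x01 tT; apply: continuous_invsqrt; last exact: fI_pos_region.
apply: cvgB; first exact: cvg_cst.
apply: cvgM; first exact: cvg_cst.
apply: cvgM; exact: continuous_cosh.
Qed.

Lemma continuous_gK (R : realType) (k th : R) : 0 <= k < 1 ->
  {for th, continuous (gK k)}.
Proof.
move=> /andP[k0 k1]; apply: continuous_invsqrt.
  apply: cvgB; first exact: cvg_cst.
  apply: cvgM; first exact: cvg_cst.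
  by apply: cvgM; exact: continuous_sin.
have s1 : sin th ^+ 2 <= 1 by rewrite sin2cos2 lerBlDr lerDl sqr_ge0.
have : k ^+ 2 < 1 by rewrite expr_lt1.
have := sqr_ge0 (sin th); nra.
Qed.

Definition tau (R : realType) (k th : R) :=
  (ln (1 + k * sin th) - ln (1 + (- k) * sin th)) / 2.

Lemma is_derive_ln1sin (R : realType) (c th : R) : 0 < 1 + c * sin th ->
  is_derive th 1 (fun s => ln (1 + c * sin s)) (c * cos th / (1 + c * sin th)).
Proof.
move=> h.
have hg : is_derive th (1:R) (fun s : R => 1 + c * sin s) (c * cos th).
  have := is_deriveD (is_derive_cst (1:R) th 1) (is_deriveZ c (is_derive_sin th)).
  by move/is_derive_eq; apply; rewrite add0r.
have := @is_derive1_comp R (@ln R) (fun s => 1 + c * sin s) th _ _ (is_derive1_ln h) hg.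
by move/is_derive_eq; apply; rewrite mulrC.
Qed.

Lemma is_derive_tau (R : realType) (k th : R) : 0 <= k < 1 ->
  is_derive th 1 (tau k) (k * cos th / (1 - (k * sin th) ^+ 2)).
Proof.
move=> /andP[k0 k1].
have hs : -1 <= sin th <= 1.
  have := sin2cos2 th; have := sqr_ge0 (cos th); nra.
have h1 : 0 < 1 + k * sin th by nra.
have h2 : 0 < 1 + (- k) * sin th by nra.
have := is_deriveZ (2^-1) (is_deriveB (is_derive_ln1sin h1) (is_derive_ln1sin h2)).
move/is_derive_eq; rewrite /tau.
have -> : (2^-1 \*: ((fun s : R => ln (1 + k * sin s)) - (fun s => ln (1 + - k * sin s)))) =
  (fun s => (ln (1 + k * sin s) - ln (1 + - k * sin s)) / 2).
  by apply/funext => s /=; rewrite mulrC.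
apply; rewrite /=.
rewrite -[_ *: _]/(_ * _). field.
rewrite !gt_eqF //. nra.
Qed.

Definition dtau (R : realType) (k th : R) := k * cos th / (1 - (k * sin th) ^+ 2).

Lemma sin_bound (R : realType) (th : R) : -1 <= sin th <= 1.
Proof. have := sin2cos2 th; have := sqr_ge0 (cos th); nra. Qed.

Lemma one_sub_u2_gt0 (R : realType) (k th : R) : 0 <= k < 1 -> 0 < 1 - (k * sin th) ^+ 2.
Proof.
move=> /andP[k0 k1].
have s1 : sin th ^+ 2 <= 1 by rewrite sin2cos2 lerBlDr lerDl sqr_ge0.
have kk : k ^+ 2 < 1 by rewrite expr_lt1.
rewrite subr_gt0 exprMn (le_lt_trans _ kk) //.
by rewrite ler_piMr ?sqr_ge0.
Qed.

Lemma derive1_tau (R : realType) (k : R) : 0 <= k < 1 -> (tau k)^`() = dtau k.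
Proof.
move=> k01; apply/funext => th; rewrite derive1E.
have := is_derive_tau th k01 => H. by rewrite derive_val.
Qed.

Lemma derivable_tau (R : realType) (k th : R) : 0 <= k < 1 -> derivable (tau k) th 1.
Proof. by move=> k01; have := is_derive_tau th k01; case. Qed.

Lemma continuous_tau (R : realType) (k : R) : 0 <= k < 1 -> continuous (tau k).
Proof.
move=> k01 th.
exact/differentiable_continuous/derivable1_diffP/derivable_tau.
Qed.

Lemma continuous_dtau (R : realType) (k : R) : 0 <= k < 1 -> continuous (dtau k).
Proof.
move=> k01 th; rewrite /dtau.
apply: cvgM.
  apply: cvgM; first exact: cvg_cst.
  exact: continuous_cos.
apply: cvgV; first by rewrite gt_eqF // one_sub_u2_gt0.
apply: cvgB; first exact: cvg_cst.
apply: cvgM; apply: cvgM; first exact: cvg_cst.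
- exact: continuous_sin.
- exact: cvg_cst.
- exact: continuous_sin.
Qed.

Lemma tau0 (R : realType) (k : R) : tau k 0 = 0.
Proof. by rewrite /tau sin0 !mulr0 addr0 ln1 subrr mul0r. Qed.

Lemma cosh_tau2 (R : realType) (k th : R) : 0 <= k < 1 ->
  cosh (tau k th) ^+ 2 = (1 - (k * sin th) ^+ 2)^-1.
Proof.
move=> /andP[k0 k1].
have := sin_bound th => hs.
have hA : 0 < 1 + k * sin th by nra.
have hB : 0 < 1 + (- k) * sin th by nra.
have e2 : expR (tau k th) ^+ 2 = (1 + k * sin th) / (1 + (- k) * sin th).
  rewrite -expRM_natl.
  have -> : 2%:R * tau k th = ln (1 + k * sin th) - ln (1 + (- k) * sin th).
    by rewrite /tau mulrC -mulrA mulVf ?pnatr_eq0 // mulr1.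
  by rewrite expRB !lnK ?posrE.
rewrite /cosh expRN.
have e0 := expR_gt0 (tau k th).
set e := expR (tau k th) in e2 e0 *.
have -> : ((e + e^-1) / 2) ^+ 2 = (e ^+ 2 + 2 + (e ^+ 2)^-1) / 4.
  by field; rewrite gt_eqF.
rewrite e2; field.
rewrite !gt_eqF //; nra.
Qed.

Lemma fI_tau (R : realType) (x k th : R) : 0 < x -> 0 < k < 1 -> k ^+ 2 = 1 - x ^+ 2 ->
  0 < cos th -> fI x (tau k th) * dtau k th = gK k th.
Proof.
move=> x0 /andP[k0 k1] kx c0.
have k01 : 0 <= k < 1 by rewrite (ltW k0) k1.
have u0 := one_sub_u2_gt0 th k01.
rewrite /fI /gK /dtau cosh_tau2 //.
have -> : 1 - x ^+ 2 * (1 - (k * sin th) ^+ 2)^-1 =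
    (k * cos th) ^+ 2 * (1 - (k * sin th) ^+ 2)^-1.
  have := cos2sin2 th => hc.
  apply: (@mulIf _ (1 - (k * sin th) ^+ 2)); first by rewrite gt_eqF.
  rewrite mulrBl !mulfVK ?gt_eqF // mul1r [(k * cos th) ^+ 2]exprMn hc.
  have -> : x ^+ 2 = 1 - k ^+ 2 by rewrite kx; ring.
  ring.
rewrite sqrtrM ?sqr_ge0 // sqrtr_sqr sqrtrV ?(ltW u0) // ger0_norm; last by rewrite mulr_ge0 // ltW.
rewrite -exprMn.
have w0 : 0 < Num.sqrt (1 - (k * sin th) ^+ 2) by rewrite sqrtr_gt0.
have w2 := sqr_sqrtr (ltW u0).
set w := Num.sqrt _ in w0 w2 *.
rewrite -w2; field.
by rewrite !gt_eqF // ?mulr_gt0.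
Qed.

Lemma tau_lt (R : realType) (k a b : R) : 0 < k < 1 ->
  a \in `[- (pi / 2), pi / 2]%R -> b \in `[- (pi / 2), pi / 2]%R -> a < b -> tau k a < tau k b.
Proof.
move=> /andP[k0 k1] ha hb ab.
have sab : sin a < sin b by rewrite ltr_sin.
have := sin_bound a; have := sin_bound b => hsb hsa.
rewrite /tau ltr_pM2r // ltr_leB //.
- rewrite ltr_ln ?posrE; nra.
- rewrite ler_ln ?posrE; nra.
Qed.

Lemma tau_le (R : realType) (k a b : R) : 0 < k < 1 ->
  a \in `[- (pi / 2), pi / 2]%R -> b \in `[- (pi / 2), pi / 2]%R -> a <= b -> tau k a <= tau k b.
Proof.
move=> k01 ha hb; rewrite le_eqVlt => /predU1P[-> //|ab].
exact/ltW/tau_lt.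
Qed.

Lemma tau_pihalf (R : realType) (x : R) : 0 < x < 1 ->
  tau (Num.sqrt (1 - x ^+ 2)) (pi / 2) = arcosh x^-1.
Proof.
move=> /andP[x0 x1].
have hk : 0 <= 1 - x ^+ 2 by rewrite subr_ge0 expr_le1 // ltW.
have k2 := sqr_sqrtr hk.
have kk0 := sqrtr_ge0 (1 - x ^+ 2).
set k := Num.sqrt _ in k2 kk0 *.
have k1 : k < 1.
  rewrite -(ltr_pXn2r (n := 2)) ?nnegrE // expr1n k2; nra.
rewrite /tau /arcosh sin_pihalf !mulr1.
have -> : x^-1 ^+ 2 - 1 = (k / x) ^+ 2.
  rewrite exprMn k2 exprVn; field; by rewrite gt_eqF.
rewrite sqrtr_sqr ger0_norm ?divr_ge0 ?(ltW x0) //.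
apply: (@mulIf _ 2); first by rewrite pnatr_eq0.
rewrite mulfVK ?pnatr_eq0 //.
apply: expR_inj.
rewrite expRB !lnK ?posrE; try lra.
rewrite -[2]/(2%:R) expRM_natr lnK; last first.
  rewrite posrE; have : 0 < x^-1 by rewrite invr_gt0.
  have : 0 <= k / x by rewrite divr_ge0 // ltW.
  lra.
clearbody k.
have -> : (x^-1 + k / x) ^+ 2 = (1 + k) ^+ 2 / x ^+ 2 by field; rewrite gt_eqF.
have -> : x ^+ 2 = (1 - k) * (1 + k).
  have -> : x ^+ 2 = 1 - k ^+ 2 by rewrite k2; ring.
  ring.
field.
rewrite !gt_eqF //; lra.
Qed.

Notation mu := (@lebesgue_measure _).

Lemma subst_step (R : realType) (x c : R) : 0 < x < 1 -> 0 <= c < pi / 2 ->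
  (\int[@lebesgue_measure R]_(t in `[0%R, (tau (Num.sqrt (1 - x ^+ 2)) c)%R]) (fI x t)%:E =
   \int[@lebesgue_measure R]_(th in `[0%R, c]) (gK (Num.sqrt (1 - x ^+ 2)) th)%:E)%E.
Proof.
move=> /andP[x0 x1] /andP[c0 cpi].
have pi0 : 0 < pi / 2 :> R by rewrite divr_gt0 // pi_gt0.
have hk : 0 <= 1 - x ^+ 2 by rewrite subr_ge0 expr_le1 // ltW.
have k2 := sqr_sqrtr hk.
have kpos : 0 < Num.sqrt (1 - x ^+ 2) by rewrite sqrtr_gt0 subr_gt0 expr_lt1 // ltW.
have TT : tau (Num.sqrt (1 - x ^+ 2)) (pi / 2) = arcosh x^-1 by apply: tau_pihalf; rewrite x0 x1.
set k := Num.sqrt _ in k2 kpos TT *.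
have k1 : k < 1.
  rewrite -(ltr_pXn2r (n := 2)) ?nnegrE ?(ltW kpos) // expr1n k2; nra.
have k01 : 0 < k < 1 by rewrite kpos k1.
have k01' : 0 <= k < 1 by rewrite (ltW kpos) k1.
have inpi (t : R) : 0 <= t <= c -> t \in `[- (pi / 2), pi / 2]%R.
  by move=> /andP[? ?]; rewrite in_itv /=; apply/andP; split; lra.
have := @integration_by_substitution_increasing R (tau k) (fI x) 0 c c0.
rewrite tau0 => ->.
- apply: eq_integral => th; rewrite inE /= in_itv /= => /andP[h0 h1].
  rewrite derive1_tau //; congr EFin.
  change (fI x (tau k th) * dtau k th = gK k th); rewrite fI_tau //.
  by apply: cos_gt0_pihalf; apply/andP; split; lra.
- move=> a b; rewrite !in_itv /= => ha hb ab.
  by apply: tau_lt => //; apply: inpi.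
- by rewrite derive1_tau // => th _; exact: continuous_dtau.
- rewrite derive1_tau //; apply/cvg_ex; exists (dtau k 0).
  by apply: cvg_at_right_filter; exact: continuous_dtau.
- rewrite derive1_tau //; apply/cvg_ex; exists (dtau k c).
  by apply: cvg_at_left_filter; exact: continuous_dtau.
- split.
  + by move=> th _; exact: derivable_tau.
  + by apply: cvg_at_right_filter; exact: continuous_tau.
  + by apply: cvg_at_left_filter; exact: continuous_tau.
- apply: continuous_in_subspaceT => t; rewrite inE /= in_itv /= => /andP[t0 tc].
  apply: continuous_fI; first by rewrite x0 x1.
  rewrite ger0_norm // -TT (le_lt_trans tc) //.
  apply: tau_lt => //; first by apply: inpi; rewrite c0 lexx.
  by rewrite in_itv /=; apply/andP; split; lra.
Qed.

Definition cseq (R : realType) (n : nat) : R := pi / 2 * (1 - (n.+1%:R)^-1).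

Lemma cseq_bnd (R : realType) n : 0 <= cseq R n < pi / 2.
Proof.
have pi0 : 0 < pi / 2 :> R by rewrite divr_gt0 // pi_gt0.
have h1 : 0 < (n.+1%:R : R)^-1 by rewrite invr_gt0 ltr0n.
have h2 : (n.+1%:R : R)^-1 <= 1 by rewrite invr_le1 ?unitfE ?pnatr_eq0 // ?ler1n ?ltr0n.
rewrite /cseq; apply/andP; split.
  by rewrite mulr_ge0 ?(ltW pi0) // subr_ge0.
by rewrite gtr_pMr // ltrBlDr ltrDl.
Qed.

Lemma cseq_nd (R : realType) (n m : nat) : (n <= m)%N -> cseq R n <= cseq R m.
Proof.
move=> nm.
have pi0 : 0 < pi / 2 :> R by rewrite divr_gt0 // pi_gt0.
rewrite /cseq ler_pM2l // lerD2l lerN2 lef_pV2 ?posrE ?ltr0n //.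
by rewrite ler_nat.
Qed.

Lemma cseq_arch (R : realType) (th : R) : th < pi / 2 -> exists n, th <= cseq R n.
Proof.
move=> thp.
have pi0 : 0 < pi / 2 :> R by rewrite divr_gt0 // pi_gt0.
set e := 1 - th / (pi / 2).
have e0 : 0 < e by rewrite /e subr_gt0 ltr_pdivrMr // mul1r.
exists (Num.Def.trunc e^-1).
have h := truncnS_gt e^-1.
set N := (Num.Def.trunc e^-1).+1%:R in h *.
have N0 : 0 < N by rewrite (lt_trans _ h) // invr_gt0.
have hN : N^-1 < e by rewrite -(invrK e) ltf_pV2 ?posrE ?invr_gt0.
rewrite /cseq -/N.
have -> : th = pi / 2 * (1 - e) by rewrite /e opprB addrC subrK mulrC divfK // gt_eqF.
by rewrite ler_pM2l // lerD2l lerN2 ltW.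
Qed.

Lemma bigcup_B (R : realType) :
  \bigcup_n `[0%R, cseq R n] = `[0%R, pi / 2[.
Proof.
apply/seteqP; split => t.
  move=> [n _]; rewrite /= !in_itv /= => /andP[t0 tn].
  have := cseq_bnd R n => /andP[_ h]; rewrite t0 /=; exact: le_lt_trans h.
rewrite /= in_itv /= => /andP[t0 tp]; have [n hn] := cseq_arch tp.
by exists n => //; rewrite /= in_itv /= t0 hn.
Qed.

Lemma bigcup_A (R : realType) (x : R) : 0 < x < 1 ->
  \bigcup_n `[0%R, tau (Num.sqrt (1 - x ^+ 2)) (cseq R n)] = `[0%R, arcosh x^-1[.
Proof.
move=> /andP[x0 x1].
have pi0 : 0 < pi / 2 :> R by rewrite divr_gt0 // pi_gt0.
have hk : 0 <= 1 - x ^+ 2 by rewrite subr_ge0 expr_le1 // ltW.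
have k2 := sqr_sqrtr hk.
have kpos : 0 < Num.sqrt (1 - x ^+ 2) by rewrite sqrtr_gt0 subr_gt0 expr_lt1 // ltW.
have TT : tau (Num.sqrt (1 - x ^+ 2)) (pi / 2) = arcosh x^-1 by apply: tau_pihalf; rewrite x0 x1.
set k := Num.sqrt _ in k2 kpos TT *.
have k1 : k < 1.
  rewrite -(ltr_pXn2r (n := 2)) ?nnegrE ?(ltW kpos) // expr1n k2; nra.
have k01 : 0 < k < 1 by rewrite kpos k1.
have k01' : 0 <= k < 1 by rewrite (ltW kpos) k1.
have inpi (t : R) : 0 <= t <= pi / 2 -> t \in `[- (pi / 2), pi / 2]%R.
  by move=> /andP[? ?]; rewrite in_itv /=; apply/andP; split; lra.
apply/seteqP; split => t.
  move=> [n _]; rewrite /= !in_itv /= => /andP[t0 tn].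
  rewrite t0 /= -TT (le_lt_trans tn) //.
  have := cseq_bnd R n => /andP[h1 h2].
  apply: tau_lt => //; first by apply: inpi; rewrite h1 ltW.
  by rewrite in_itv /= lexx andbT; lra.
rewrite /= in_itv /= => /andP[t0 tT].
have [th thin tht] : exists2 th, th \in `[0, pi / 2]%R & tau k th = t.
  apply: IVT; first exact: ltW.
    by apply: continuous_subspaceT; exact: continuous_tau.
  rewrite tau0 TT; have T0 : 0 <= arcosh x^-1 by lra.
  by rewrite (min_idPl T0) (max_idPr T0) t0 ltW.
move: thin; rewrite in_itv /= => /andP[th0 thp].
have thp' : th < pi / 2.
  rewrite lt_neqAle thp andbT; apply/eqP => thE.
  by move: tT; rewrite -tht thE TT ltxx.
have [n hn] := cseq_arch thp'.
exists n => //; rewrite /= in_itv /= t0 /= -tht.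
have := cseq_bnd R n => /andP[h1 h2].
by apply: tau_le => //; apply: inpi; rewrite ?th0 ?h1 ?ltW.
Qed.

Lemma mfI (R : realType) (x : R) : 0 < x < 1 ->
  measurable_fun `]- arcosh x^-1, arcosh x^-1[ (fI x).
Proof.
move=> x01; apply: open_continuous_measurable_fun; first exact: interval_open.
move=> t; rewrite inE /= in_itv /= => ht.
by apply: continuous_fI => //; rewrite ltr_norml.
Qed.

Lemma mfI_sub (R : realType) (x : R) (D : set R) : 0 < x < 1 -> measurable D ->
  D `<=` `]- arcosh x^-1, arcosh x^-1[ -> measurable_fun D (EFin \o fI x).
Proof.
move=> x01 mD DT; apply/measurable_EFinP.
apply: measurable_funS (mfI x01) => //.
Qed.

Lemma fI_ge0 (R : realType) (x t : R) : 0 <= fI x t.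
Proof. by rewrite /fI invr_ge0 sqrtr_ge0. Qed.

Lemma gK_ge0 (R : realType) (k t : R) : 0 <= gK k t.
Proof. by rewrite /gK invr_ge0 sqrtr_ge0. Qed.

Lemma key_eq (R : realType) (x : R) : 0 < x < 1 ->
  (\int[@lebesgue_measure R]_(t in `[0%R, arcosh x^-1[) (fI x t)%:E =
   \int[@lebesgue_measure R]_(th in `[0%R, (pi / 2)%R[) (gK (Num.sqrt (1 - x ^+ 2)) th)%:E)%E.
Proof.
move=> x01.
have /andP[x0 x1] := x01.
have hk : 0 <= 1 - x ^+ 2 by rewrite subr_ge0 expr_le1 // ltW.
have k2 := sqr_sqrtr hk.
have kpos : 0 < Num.sqrt (1 - x ^+ 2) by rewrite sqrtr_gt0 subr_gt0 expr_lt1 // ltW.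
have TT : tau (Num.sqrt (1 - x ^+ 2)) (pi / 2) = arcosh x^-1 by apply: tau_pihalf; rewrite x0 x1.
have BU := bigcup_A x01.
set k := Num.sqrt _ in k2 kpos TT BU *.
have k1 : k < 1.
  rewrite -(ltr_pXn2r (n := 2)) ?nnegrE ?(ltW kpos) // expr1n k2; nra.
have k01 : 0 < k < 1 by rewrite kpos k1.
have k01' : 0 <= k < 1 by rewrite (ltW kpos) k1.
have inpi (t : R) : 0 <= t <= pi / 2 -> t \in `[- (pi / 2), pi / 2]%R.
  by move=> /andP[? ?]; rewrite in_itv /=; apply/andP; split; lra.
have T0 : 0 <= arcosh x^-1 :> R.
  by apply: arcosh_ge0; rewrite invr_ge1 ?unitfE ?gt_eqF // ltW.
have E : (fun n => \int[@lebesgue_measure R]_(t in `[0%R, tau k (cseq R n)]) (fI x t)%:E)%E =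
         (fun n => \int[@lebesgue_measure R]_(t in `[0%R, cseq R n]) (gK k t)%:E)%E.
  by apply/funext => n; apply: subst_step => //; exact: cseq_bnd.
have h1 : (\int[@lebesgue_measure R]_(t in `[0%R, tau k (cseq R n)]) (fI x t)%:E)%E @[n --> \oo] -->
   (\int[@lebesgue_measure R]_(t in \bigcup_n `[0%R, tau k (cseq R n)]) (fI x t)%:E)%E.
  apply: ge0_nondecreasing_set_cvg_integral.
  - move=> n m nm; rewrite subsetEset => t /=; rewrite !in_itv /= => /andP[t0 tn].
    rewrite t0 (le_trans tn) //.
    have := cseq_bnd R n => /andP[a1 a2]; have := cseq_bnd R m => /andP[b1 b2].
    apply: tau_le => //; last exact: cseq_nd.
    + by apply: inpi; rewrite a1 ltW.
    + by apply: inpi; rewrite b1 ltW.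
  - by move=> n.
  - move=> n; apply: mfI_sub => // t /=; rewrite !in_itv /= => /andP[t0 tn].
    have tT : t < arcosh x^-1.
      rewrite (le_lt_trans tn) // -TT.
      have := cseq_bnd R n => /andP[a1 a2].
      apply: tau_lt => //; first by apply: inpi; rewrite a1 ltW.
      by rewrite in_itv /= lexx andbT; lra.
    rewrite tT andbT; lra.
  - by move=> n t _; rewrite lee_fin fI_ge0.
have h2 : (\int[@lebesgue_measure R]_(t in `[0%R, cseq R n]) (gK k t)%:E)%E @[n --> \oo] -->
   (\int[@lebesgue_measure R]_(t in \bigcup_n `[0%R, cseq R n]) (gK k t)%:E)%E.
  apply: ge0_nondecreasing_set_cvg_integral.
  + move=> n m nm; rewrite subsetEset => t /=; rewrite !in_itv /= => /andP[t0 tn].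
    by rewrite t0 (le_trans tn) // cseq_nd.
  + by move=> n.
  + move=> n; apply/measurable_EFinP; apply: (measurable_funS measurableT) => //; apply: continuous_measurable_fun => t.
    exact: continuous_gK.
  + by move=> n t _; rewrite lee_fin gK_ge0.
rewrite BU bigcup_B in h1 h2.
rewrite E in h1.
exact: (cvg_unique _ h1 h2).
Qed.


Lemma fI_ge1 (R : realType) (x t : R) : 0 < x < 1 -> `|t| < arcosh x^-1 -> 1 <= fI x t.
Proof.
move=> x01 ht; have h := fI_pos_region x01 ht.
rewrite /fI invr_ge1 ?unitfE ?gt_eqF ?sqrtr_gt0 //.
rewrite -[X in _ <= X]sqrtr1 ler_sqrt // lerBlDr lerDl mulr_ge0 // sqr_ge0 // ler01.
Qed.

Lemma gK_le (R : realType) (x th : R) : 0 < x < 1 ->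
  gK (Num.sqrt (1 - x ^+ 2)) th <= x^-1.
Proof.
move=> /andP[x0 x1].
have hk : 0 <= 1 - x ^+ 2 by rewrite subr_ge0 expr_le1 // ltW.
rewrite /gK sqr_sqrtr //.
have s1 : sin th ^+ 2 <= 1 by rewrite sin2cos2 lerBlDr lerDl sqr_ge0.
have h : x ^+ 2 <= 1 - (1 - x ^+ 2) * sin th ^+ 2.
  have := sqr_ge0 (sin th); nra.
have hx : x <= Num.sqrt (1 - (1 - x ^+ 2) * sin th ^+ 2).
  have : Num.sqrt (x ^+ 2) <= Num.sqrt (1 - (1 - x ^+ 2) * sin th ^+ 2) by rewrite ler_sqrt // (le_trans (sqr_ge0 x) h).
  by rewrite sqrtr_sqr ger0_norm // ltW.
rewrite lef_pV2 ?posrE //; exact: (lt_le_trans x0 hx).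
Qed.

Lemma ereal_aux (R : realType) (A B K : \bar R) : (0 <= A)%E -> (0 < B)%E -> (K < +oo)%E ->
  K = (A + B)%E -> (A <= K)%E /\ A <> K.
Proof.
move=> A0 B0 Kf KE.
have Afin : A \is a fin_num.
  by rewrite ge0_fin_numE // (le_lt_trans _ Kf) // KE leeDl // ltW.
have AK : (A < K)%E by rewrite KE lteDl.
by split; [exact: ltW | move=> E; move: AK; rewrite E ltxx].
Qed.

Theorem lemma6 (R : realType) (x y : R) (hx : 0 < x) (hxy : x <= y) (hy : y < 1) :
  (Ixy x y <= ellK (Num.sqrt (1 - x ^+ 2)))%E /\
  (Ixy x y = ellK (Num.sqrt (1 - x ^+ 2)) <-> x = y).
Proof.
have x1 : x < 1 := le_lt_trans hxy hy.
have x01 : 0 < x < 1 by rewrite hx x1.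
have y0 : 0 < y := lt_le_trans hx hxy.
have hk : 0 <= 1 - x ^+ 2 by rewrite subr_ge0 expr_le1 // ltW.
have k2 := sqr_sqrtr hk.
have kpos : 0 < Num.sqrt (1 - x ^+ 2) by rewrite sqrtr_gt0 subr_gt0 expr_lt1 // ltW.
have KE := key_eq x01.
set k := Num.sqrt _ in k2 kpos KE *.
have k1 : k < 1.
  rewrite -(ltr_pXn2r (n := 2)) ?nnegrE ?(ltW kpos) // expr1n k2; nra.
have k01' : 0 <= k < 1 by rewrite (ltW kpos) k1.
have pi0 : 0 < pi / 2 :> R by rewrite divr_gt0 // pi_gt0.
have x1' : 1 <= x^-1 by rewrite invr_ge1 ?unitfE ?gt_eqF // ltW.
have y1' : 1 <= y^-1 by rewrite invr_ge1 ?unitfE ?gt_eqF // ltW.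
have T0 : 0 <= arcosh x^-1 := arcosh_ge0 x1'.
have S0 : 0 <= arcosh y^-1 := arcosh_ge0 y1'.
have Tpos : 0 < arcosh x^-1.
  have x1s : 1 < x^-1 by rewrite invf_gt1.
  exact: (le_lt_trans (arcosh_ge0 (lexx 1)) (arcosh_lt (lexx 1) x1s)).
have mg : measurable_fun setT (EFin \o gK k).
  apply/measurable_EFinP; apply: continuous_measurable_fun => t.
  exact: continuous_gK.
have KE' : ellK k = (\int[@lebesgue_measure R]_(th in `[0%R, (pi / 2)%R[) (gK k th)%:E)%E.
  have -> : ellK k = (\int[@lebesgue_measure R]_(th in `[0%R, (pi / 2)%R]) (gK k th)%:E)%E by [].
  rewrite -integral_itv_bndo_bndc //.
  exact: (measurable_funS measurableT).
have IE : Ixy x x = (\int[@lebesgue_measure R]_(t in `[0%R, arcosh x^-1[) (fI x t)%:E)%E.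
  have -> : Ixy x x = (\int[@lebesgue_measure R]_(t in `[0%R, arcosh x^-1]) (fI x t)%:E)%E by [].
  rewrite -integral_itv_bndo_bndc //.
  apply: mfI_sub => // t /=; rewrite !in_itv /= => /andP[t0 ->]; rewrite andbT; lra.
have Ieq : Ixy x x = ellK k by rewrite IE KE KE'.
have Kfin : (ellK k < +oo)%E.
  have -> : ellK k = (\int[@lebesgue_measure R]_(th in `[0%R, (pi / 2)%R]) (gK k th)%:E)%E by [].
  apply: (@le_lt_trans _ _ (\int[@lebesgue_measure R]_(th in `[0%R, (pi / 2)%R]) (cst (x^-1)%:E th))%E).
    apply: ge0_le_integral => //.
    - by move=> t _; rewrite lee_fin gK_ge0.
    - exact: (measurable_funS measurableT).
    - by move=> t _; rewrite lee_fin gK_le.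
  rewrite integral_cst //= lebesgue_measure_itv /= lte_fin pi0 -EFinD -EFinM.
  exact: ltry.
case: (ltgtP x y) hxy => // [xy _|<- _]; last first.
  by rewrite Ieq; split.
have ST : arcosh y^-1 < arcosh x^-1 by apply: arcosh_lt => //; rewrite ltf_pV2 ?posrE.
set S := arcosh y^-1 in S0 ST *.
set T := arcosh x^-1 in T0 ST IE Ieq KE *.
have U : `[0%R, T[ = `[0%R, S] `|` `]S, T[ :> set R.
  apply/seteqP; split => t /=; rewrite !in_itv /=.
    move=> /andP[t0 tT]; case: (leP t S) => tS; [left|right].
      by rewrite t0.
    by rewrite tT.
  move=> [] /andP[a b]; apply/andP; split; lra.
have mU : measurable_fun (`[0%R, S] `|` `]S, T[) (EFin \o fI x).
  apply: mfI_sub; [done|exact: measurableU|]; rewrite -U => t /=; rewrite !in_itv /= => /andP[t0 ->]; rewrite andbT; lra.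
have split_eq : (ellK k = Ixy x y + \int[@lebesgue_measure R]_(t in `]S, T[) (fI x t)%:E)%E.
  rewrite -Ieq IE U ge0_integral_setU //.
  - by move=> t _; rewrite lee_fin fI_ge0.
  - rewrite disj_set2E; apply/eqP; apply/seteqP; split => t //=.
    rewrite !in_itv /= => -[/andP[_ a] /andP[b _]]; lra.
have Bpos : (0 < \int[@lebesgue_measure R]_(t in `]S, T[) (fI x t)%:E)%E.
  apply: (@lt_le_trans _ _ (\int[@lebesgue_measure R]_(t in `]S, T[) (cst 1%:E t))%E).
    by rewrite integral_cst //= lebesgue_measure_itv /= lte_fin ST mul1e lte_fin subr_gt0.
  apply: ge0_le_integral => //.
  - apply: measurable_funS mU; [exact: measurableU| by move=> t ?; right].
  - move=> t; rewrite /= in_itv /= => /andP[a b]; rewrite lee_fin fI_ge1 //.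
    by rewrite ger0_norm; [exact: b|lra].
have A0 : (0 <= Ixy x y)%E.
  by rewrite /Ixy; apply: integral_ge0 => t _; rewrite lee_fin invr_ge0 sqrtr_ge0.
have [h1 h2] := ereal_aux A0 Bpos Kfin split_eq.
split; first exact: h1.
split => [E|E]; last by move: xy; rewrite E ltxx.
by exfalso; apply: h2.
Qed.
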